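(* Let $d\geq 1$ and $s\geq 2$ be integers, let $A:=\{\sqrt{2i}\colon i\in\{1,\dots,s\}\}$, and let $\mathcal{W}:=\{(w_1,\dots,w_d)^T\in\mathbb{R}^d\colon w_i\in A \text{ for all } i\in\{1,\dots,d\}\}$. For $w=(w_1,\dots,w_d)^T\in\mathcal{W}$ let $\mathcal{V}_w$ be the set of real solution vectors $v=(v_1,\dots,v_d)^T\in\mathbb{R}^d$ of the system of $d$ equations \[ \sum_{i=1}^d\left(\frac{w_1^2-w_i^2}{2}+v_1\right)^2=w_1^2+2v_1-1,\qquad v_j=\frac{w_1^2-w_j^2}{2}+v_1\quad (j\in\{2,\dots,d\}). \] Let $\Gamma$ be the graph whose vertex set is $\bigcup_{w\in\mathcal{W}}\mathcal{V}_w$, in which two distinct vertices $x,y$ are adjacent if and only if $\mu(x,y)\in A$, and let $\omega(\Gamma)$ be the size of a maximum clique of $\Gamma$. Then for some subset $A'\subseteq A$ there exists a set $\mathcal{X}\subset\mathbb{R}^d$ with $d+\omega(\Gamma)$ elements which is an $|A'|$-distance set with $A(\mathcal{X})=A'$.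
   Context: $\mu(x,y)$ denotes the Euclidean distance in $\mathbb{R}^d$. For a finite set $\mathcal{X}$ of distinct vectors in $\mathbb{R}^d$, $A(\mathcal{X})$ denotes the set of distances $\mu(x,y)$ between distinct elements $x,y\in\mathcal{X}$; $\mathcal{X}$ is called an $s$-distance set if $|A(\mathcal{X})|=s$. A clique of a graph is a set of pairwise adjacent vertices. *)

(* Defs.v *)
From HB Require Import structures.
From mathcomp Require Import all_boot all_order all_algebra.
From mathcomp Require Import reals.
Set Implicit Arguments. Unset Strict Implicit. Unset Printing Implicit Defensive.
Import Order.TTheory GRing.Theory Num.Theory.
Local Open Scope ring_scope.

Definition mu (R : realType) (d : nat) (x y : 'rV[R]_d) : R :=
  Num.sqrt (\sum_(i < d) (x 0 i - y 0 i) ^+ 2).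

Definition Aset (R : realType) (s : nat) (a : R) : Prop :=
  exists i : nat, (1 <= i <= s)%N /\ a = Num.sqrt (2 * i%:R).

Definition Wset (R : realType) (d s : nat) (w : 'rV[R]_d) : Prop :=
  forall i : 'I_d, Aset s (w 0 i).

(* V_w : solutions of the system; index i0 with val i0 = 0 is the first
   coordinate (w_1, v_1). *)
Definition Vset (R : realType) (d : nat) (w v : 'rV[R]_d) : Prop :=
  forall i0 : 'I_d, nat_of_ord i0 = 0%N ->
    (\sum_(i < d) ((w 0 i0 ^+ 2 - w 0 i ^+ 2) / 2 + v 0 i0) ^+ 2
       = w 0 i0 ^+ 2 + 2 * v 0 i0 - 1)
    /\ (forall j : 'I_d, (1 <= nat_of_ord j)%N ->
          v 0 j = (w 0 i0 ^+ 2 - w 0 j ^+ 2) / 2 + v 0 i0).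

Definition vertex (R : realType) (d s : nat) (v : 'rV[R]_d) : Prop :=
  exists w, Wset s w /\ Vset w v.

Definition adj (R : realType) (d s : nat) (x y : 'rV[R]_d) : Prop :=
  Aset s (mu x y).

Definition clique (R : realType) (d s : nat) (C : seq 'rV[R]_d) : Prop :=
  uniq C /\ (forall x, x \in C -> vertex s x) /\
  (forall x y, x \in C -> y \in C -> x != y -> adj s x y).

Definition clique_number (R : realType) (d s : nat) (k : nat) : Prop :=
  (exists C : seq 'rV[R]_d, clique s C /\ size C = k) /\
  (forall C : seq 'rV[R]_d, clique s C -> (size C <= k)%N).

Definition dist_set (R : realType) (d : nat) (X : seq 'rV[R]_d) (a : R) : Prop :=
  exists x y, x \in X /\ y \in X /\ x != y /\ a = mu x y.

(* Main.v *)
Require Import Defs.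
From HB Require Import structures.
From mathcomp Require Import all_boot all_order all_algebra.
From mathcomp Require Import reals.
From mathcomp Require Import ring lra.
Set Implicit Arguments. Unset Strict Implicit.
Import Order.TTheory GRing.Theory Num.Theory.
Local Open Scope ring_scope.

Section Aux.
Variable R : realType.
Variable d : nat.

Definition ee (j : 'I_d) : 'rV[R]_d := \row_k ((k == j)%:R : R).

Lemma Aset_gt0 s (a : R) : Aset s a -> 0 < a.
Proof.
case=> i [/andP [hi _] ->]; rewrite sqrtr_gt0 mulr_gt0 // ltr0n //.
Qed.

Lemma mu_sym (x y : 'rV[R]_d) : mu x y = mu y x.
Proof. rewrite /mu; congr Num.sqrt; apply: eq_bigr => i _; by rewrite -sqrrN opprB. Qed.

Lemma mu_xx (x : 'rV[R]_d) : mu x x = 0.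
Proof. rewrite /mu big1 ?sqrtr0 // => k _; by rewrite subrr expr2 mulr0. Qed.

Lemma mu_ee i j : i != j -> mu (ee i) (ee j) = Num.sqrt 2.
Proof.
move=> hij; rewrite /mu (bigD1 i) //= (bigD1 j) //=; last by rewrite eq_sym.
rewrite big1; last first.
  by move=> k /andP [hki hkj]; rewrite !mxE (negbTE hki) (negbTE hkj) subrr expr2 mulr0.
rewrite !mxE eqxx (negbTE hij) eq_sym (negbTE hij) /=.
  by rewrite subr0 sub0r sqrrN expr1n addr0 eqxx expr1n.
Qed.

Lemma sum_sq_delta (x : 'rV[R]_d) j :
  \sum_k (x 0 k - (ee j) 0 k) ^+ 2 = \sum_k x 0 k ^+ 2 - 2 * x 0 j + 1.
Proof.
rewrite (bigD1 j) //= [in RHS](bigD1 j) //= !mxE eqxx /=.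
rewrite (eq_bigr (fun k => x 0 k ^+ 2)); first ring.
by move=> k /negbTE hk; rewrite !mxE hk subr0.
Qed.

Lemma vertex_dist s (hd : (1 <= d)%N) (v : 'rV[R]_d) :
  vertex s v -> forall j, Aset s (mu v (ee j)).
Proof.
case=> w [Ww Vv] j.
pose i0 := Ordinal hd.
have [Hsum Hrel] := Vv i0 erefl.
have Hall : forall k, v 0 k = (w 0 i0 ^+ 2 - w 0 k ^+ 2) / 2 + v 0 i0.
  move=> k; case: (posnP k) => hk; last exact: Hrel.
  have -> : k = i0 by apply: val_inj.
  by rewrite subrr mul0r add0r.
have Hs : \sum_k v 0 k ^+ 2 = w 0 i0 ^+ 2 + 2 * v 0 i0 - 1.
  by rewrite -Hsum; apply: eq_bigr => k _; rewrite -Hall.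
have wge0 : 0 <= w 0 j.
  by case: (Ww j) => i [_ ->]; exact: sqrtr_ge0.
rewrite /mu sum_sq_delta Hs (Hall j).
have -> : w 0 i0 ^+ 2 + 2 * v 0 i0 - 1 -
  2 * ((w 0 i0 ^+ 2 - w 0 j ^+ 2) / 2 + v 0 i0) + 1 = w 0 j ^+ 2.
  by field.
by rewrite sqrtr_sqr ger0_norm //; exact: Ww.
Qed.

End Aux.

Theorem theorem2p1 (R : realType) (d s : nat) (hd : (1 <= d)%N) (hs : (2 <= s)%N)
    (omega : nat) (homega : @clique_number R d s omega) :
  exists A' : R -> Prop,
    (forall a, A' a -> @Aset R s a) /\
    exists X : seq 'rV[R]_d,
      uniq X /\ size X = (d + omega)%N /\
      (forall a, @dist_set R d X a <-> A' a).
Proof.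
case: homega => [[C [[Cu [Cv Cadj]] Csz]] _].
pose X := [seq @ee R d j | j <- enum 'I_d] ++ C.
exists (dist_set X); split.
  move=> a [x [y [hx [hy [hxy ->]]]]].
  move: hx hy; rewrite !mem_cat => hx hy.
  case/orP: hx => hx; case/orP: hy => hy.
  - case/mapP: hx => i _ hxi; case/mapP: hy => j _ hyj; subst x y.
    have hij : i != j by apply/eqP => eij; move: hxy; rewrite eij eqxx.
    rewrite mu_ee //; exists 1%N; split; [by rewrite /= ltnW | by rewrite mulr1].
  - case/mapP: hx => i _ ->; rewrite mu_sym; exact: (vertex_dist hd (Cv y hy) i).
  - case/mapP: hy => i _ ->; exact: (vertex_dist hd (Cv x hx) i).
  - exact: Cadj.
exists X; split; last split => //.
  rewrite cat_uniq Cu andbT; apply/andP; split.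
    rewrite map_inj_uniq ?enum_uniq // => i j hij.
    have := congr1 (fun m : 'rV[R]_d => m 0 i) hij; rewrite /= !mxE eqxx.
    case: eqP => // _ /eqP; by rewrite oner_eq0.
  apply/hasPn => x hx; apply/negP => /mapP [j _ hxj].
  have := vertex_dist hd (Cv _ hx) j; rewrite hxj mu_xx => /Aset_gt0.
  by rewrite ltxx.
by rewrite size_cat size_map size_enum_ord Csz.
Qed.
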